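(* Let $\rho^n$ be a periodic grid function on the grid of $(0,1)^3$ with $\rho^n_{i,j,k}>0$ for all $0\le i,j,k\le N_0-1$, and let $\hat\rho^{n+1}$ be any periodic grid function with $\hat\rho^{n+1}_{i,j,k}>0$ for all indices (e.g. the solution of the semi-implicit predictor in the context). Set $\hat\rho^{n+1/2}=\tfrac12(\rho^n+\hat\rho^{n+1})$ and $\mathcal{M}^{n+1/2}_h=\mathcal{A}_h\big(D(\hat\rho^{n+1/2})\hat\rho^{n+1/2}\big)$. Then there exists a unique periodic grid function $\rho^{n+1}$ with $\rho^{n+1}_{i,j,k}>0$ for all indices satisfying $$\frac{\rho^{n+1}-\rho^n}{\Delta t}=\nabla_h\cdot\big(\mathcal{M}^{n+1/2}_h\nabla_h\mu^{n+1/2}\big),\qquad \mu^{n+1/2}=Q(\rho^{n+1},\rho^n)+\Delta t\,(\ln\rho^{n+1}-\ln\rho^n),$$ where all nonlinear functions are applied pointwise.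
   Context: $N_0\ge1$, $h=1/N_0$; grid functions live on $\{(ih,jh,kh):0\le i,j,k\le N_0-1\}$ and are periodic (indices mod $N_0$). $\Delta t>0$, $C\in\mathbb{R}$, $D:(0,\infty)\to(0,\infty)$ is a given (continuous) diffusion coefficient. $F(\rho)=\rho\ln\rho+C\rho$, and $Q(p,q)=\frac{F(p)-F(q)}{p-q}$ for $p\ne q$, $Q(p,p)=F'(p)=\ln p+1+C$. Discrete operators: $(\nabla_h f)$ has components at staggered points, e.g. $(D_xf)_{i+1/2,j,k}=(f_{i+1,j,k}-f_{i,j,k})/h$ and similarly in $y,z$; for a staggered vector field $\mathbf{v}=(v^x,v^y,v^z)$, $(\nabla_h\cdot\mathbf v)_{i,j,k}=(v^x_{i+1/2,j,k}-v^x_{i-1/2,j,k}+v^y_{i,j+1/2,k}-v^y_{i,j-1/2,k}+v^z_{i,j,k+1/2}-v^z_{i,j,k-1/2})/h$; the averaging operator $\mathcal{A}_h$ maps a cell-centered $g$ to staggered values, e.g. $(\mathcal{A}_hg)_{i+1/2,j,k}=\tfrac12(g_{i,j,k}+g_{i+1,j,k})$, and the product $\mathcal{M}\nabla_h\mu$ is taken componentwise at staggered points. A possible predictor is the semi-implicit scheme $\frac{\hat\rho^{n+1}-\rho^n}{\Delta t}=\nabla_h\cdot\big(\mathcal{A}_h[D(\rho^n)]\nabla_h\hat\rho^{n+1}\big)$, whose solution is positive when $\rho^n$ is. *)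

(* Defs.v *)
From HB Require Import structures.
From mathcomp Require Import all_boot all_order all_algebra.
From mathcomp Require Import all_classical all_reals all_analysis.
Set Implicit Arguments. Unset Strict Implicit. Unset Printing Implicit Defensive.
Import Order.TTheory GRing.Theory Num.Theory.
Local Open Scope ring_scope.

Section Grid.
Variable R : realType.
Variable N0 : nat.

(* periodic grid functions on {0..N0-1}^3; index shifts are taken mod N0 *)
Definition grid := 'I_N0 -> 'I_N0 -> 'I_N0 -> R.

Definition gh : R := (N0%:R)^-1.

Definition ip (i : 'I_N0) : 'I_N0 := ordS i.
Definition im (i : 'I_N0) : 'I_N0 := ord_pred i.

(* staggered vector field: vx i j k = value at (i+1/2,j,k), vy at (i,j+1/2,k),
   vz at (i,j,k+1/2) *)
Record sgrid := SGrid { sx : grid; sy : grid; sz : grid }.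

Definition grad_h (f : grid) : sgrid :=
  SGrid (fun i j k => (f (ip i) j k - f i j k) / gh)
        (fun i j k => (f i (ip j) k - f i j k) / gh)
        (fun i j k => (f i j (ip k) - f i j k) / gh).

Definition div_h (v : sgrid) : grid := fun i j k =>
  (sx v i j k - sx v (im i) j k
   + sy v i j k - sy v i (im j) k
   + sz v i j k - sz v i j (im k)) / gh.

Definition avg_h (g : grid) : sgrid :=
  SGrid (fun i j k => (g i j k + g (ip i) j k) / 2)
        (fun i j k => (g i j k + g i (ip j) k) / 2)
        (fun i j k => (g i j k + g i j (ip k)) / 2).

Definition smul (m v : sgrid) : sgrid :=
  SGrid (fun i j k => sx m i j k * sx v i j k)
        (fun i j k => sy m i j k * sy v i j k)
        (fun i j k => sz m i j k * sz v i j k).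

End Grid.

Section Energy.
Variable R : realType.
Definition Fen (C : R) (r : R) : R := r * ln r + C * r.
Definition Qdq (C : R) (p q : R) : R :=
  if p == q then ln p + 1 + C else (Fen C p - Fen C q) / (p - q).
End Energy.

Definition scheme (R : realType) (N0 : nat) (dt C : R) (D : R -> R)
  (rho0 rhohat rho1 : grid R N0) : Prop :=
  let rhalf : grid R N0 := fun i j k => (rho0 i j k + rhohat i j k) / 2 in
  let M := avg_h (fun i j k => D (rhalf i j k) * rhalf i j k) in
  let mu : grid R N0 := fun i j k =>
     Qdq C (rho1 i j k) (rho0 i j k)
     + dt * (ln (rho1 i j k) - ln (rho0 i j k)) in
  forall i j k,
    (rho1 i j k - rho0 i j k) / dt = div_h (smul M (grad_h mu)) i j k.

(* Main.v *)
Require Import Defs.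
From HB Require Import structures.
From mathcomp Require Import all_boot all_order all_algebra.
From mathcomp Require Import all_classical all_reals all_analysis.
From mathcomp.algebra_tactics Require Import ring lra.
Import Order.TTheory GRing.Theory Num.Theory.
Import numFieldNormedType.Exports.
Local Open Scope classical_set_scope.
Local Open Scope ring_scope.

Section Ana.
Variable R : realType.
Implicit Types (a b x y q : R).

Definition dv (C a : R) := ln a + 1 + C.

Lemma tangent C a b : 0 < a -> 0 < b ->
  Fen C a + dv C a * (b - a) <= Fen C b.
Proof.
move=> a0 b0; rewrite /Fen /dv.
have h1 : ln (1 + (a / b - 1)) <= a / b - 1.
  apply: le_ln1Dx; rewrite ltrBrDl addrN; exact: divr_gt0.
have e1 : 1 + (a / b - 1) = a / b by ring.
rewrite e1 ln_div ?posrE // in h1.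
have h2 : b * (ln a - ln b) <= b * (a / b - 1) by rewrite ler_pM2l.
have e2 : b * (a / b - 1) = a - b by field; rewrite gt_eqF.
rewrite e2 in h2. lra.
Qed.

Lemma QE C p q : p != q -> Qdq C p q * (p - q) = Fen C p - Fen C q.
Proof. by move=> pq; rewrite /Qdq (negbTE pq) divfK // subr_eq0. Qed.

Lemma Qqq C q : Qdq C q q = dv C q.
Proof. by rewrite /Qdq eqxx. Qed.

Lemma Qmono C x y q : 0 < x -> x < y -> 0 < q -> Qdq C x q <= Qdq C y q.
Proof.
move=> x0 xy q0; have y0 : 0 < y by lra.
have tqx := tangent C _ _ q0 x0; have txq := tangent C _ _ x0 q0.
have tqy := tangent C _ _ q0 y0; have tyq := tangent C _ _ y0 q0.
have txy := tangent C _ _ x0 y0; have tyx := tangent C _ _ y0 x0.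
have [exq|xq] := eqVneq x q.
  subst q; rewrite Qqq; have yq : y != x by rewrite (gt_eqF xy).
  have := QE C _ _ yq; set B := Qdq C y x => eB.
  have : dv C x * (y - x) <= B * (y - x) by lra.
  by rewrite ler_pM2r ?subr_gt0.
have [eyq|yq] := eqVneq y q.
  subst q; rewrite Qqq; have := QE C _ _ xq; set A := Qdq C x y => eA.
  have : A * (y - x) <= dv C y * (y - x) by lra.
  by rewrite ler_pM2r ?subr_gt0.
have := QE C _ _ xq; set A := Qdq C x q => eA.
have := QE C _ _ yq; set B := Qdq C y q => eB.
have [qx|xq'] := ltrP q x.
  have hA : A * (x - q) <= dv C x * (x - q) by lra.
  rewrite ler_pM2r ?subr_gt0 // in hA.
  have hB : A * (y - q) <= B * (y - q).
    have : A * (y - x) <= dv C x * (y - x) by rewrite ler_pM2r ?subr_gt0.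
    lra.
  by rewrite ler_pM2r ?subr_gt0 // in hB; lra.
have {xq'} xq' : x < q by rewrite lt_neqAle xq.
have [yq'|qy] := ltrP y q.
  have hB : dv C y * (q - y) <= B * (q - y) by lra.
  rewrite ler_pM2r ?subr_gt0 // in hB.
  have hA : A * (q - x) <= B * (q - x).
    have : dv C y * (y - x) <= B * (y - x) by rewrite ler_pM2r ?subr_gt0.
    lra.
  by rewrite ler_pM2r ?subr_gt0 // in hA.
have {qy} qy : q < y by rewrite lt_neqAle eq_sym yq.
have hA : A * (q - x) <= dv C q * (q - x) by lra.
have hB : dv C q * (y - q) <= B * (y - q) by lra.
rewrite ler_pM2r ?subr_gt0 // in hA; rewrite ler_pM2r ?subr_gt0 // in hB.
lra.
Qed.

Lemma Fen_cont C x0 : 0 < x0 -> {for x0, continuous (Fen C)}.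
Proof.
move=> x0p; rewrite /prop_for /continuous_at /Fen.
apply: cvgD.
  by apply: cvgM; [exact: cvg_id | exact: continuous_ln].
by apply: cvgM; [exact: cvg_cst | exact: cvg_id].
Qed.

Lemma Qbound C x q : 0 < x -> 0 < q -> `|Qdq C x q - dv C q| <= `|ln x - ln q|.
Proof.
move=> x0 q0.
have n1 := ler_norm (ln x - ln q); have n2 := ler_norm (-(ln x - ln q)).
rewrite normrN in n2.
have txq := tangent C _ _ x0 q0.
have [exq|xq] := eqVneq x q.
  by subst q; rewrite Qqq subrr normr0.
have := QE C _ _ xq; set A := Qdq C x q => eA.
rewrite ler_norml; apply/andP; rewrite /dv in txq *.
have [xlq|qlx] := ltrP x q.
  have hu : A <= Qdq C q q by apply: Qmono.
  rewrite Qqq /dv in hu.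
  have hl : (ln x + 1 + C) * (q - x) <= A * (q - x) by lra.
  rewrite ler_pM2r ?subr_gt0 // in hl.
  split; lra.
have {qlx} qlx : q < x by rewrite lt_neqAle eq_sym xq.
have hu : Qdq C q q <= A by apply: Qmono.
rewrite Qqq /dv in hu.
have hl : A * (x - q) <= (ln x + 1 + C) * (x - q) by lra.
rewrite ler_pM2r ?subr_gt0 // in hl.
split; lra.
Qed.

Lemma Q_cont C q x0 : 0 < q -> 0 < x0 -> {for x0, continuous (fun x => Qdq C x q)}.
Proof.
move=> q0 x0p.
have [exq|xq] := eqVneq x0 q.
  subst x0; rewrite /prop_for /continuous_at Qqq.
  apply/cvgrPdist_le => e e0.
  have lnc := continuous_ln q0.
  move/cvgrPdist_le : lnc => /(_ e e0) lnc.
  have pos : \forall x \near q, 0 < x.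
    have := @cvg_id _ (nbhs q). move/cvgrPdist_lt => /(_ q q0).
    apply: filterS => x hx. 
    have : `|q - x| < q by [].
    rewrite ltr_norml; lra.
  near=> x.
  have hx : 0 < x by near: x.
  have hl : `|ln q - ln x| <= e by near: x.
  rewrite distrC; apply: le_trans (Qbound C _ _ hx q0) _.
  by rewrite distrC.
have hc : {for x0, continuous (fun x => (Fen C x - Fen C q) / (x - q))}.
  rewrite /prop_for /continuous_at.
  apply: cvgM.
    by apply: cvgB; [exact: Fen_cont | exact: cvg_cst].
  apply: cvgV; first by rewrite subr_eq0.
  by apply: cvgB; [exact: cvg_id | exact: cvg_cst].
rewrite /prop_for /continuous_at.
have e : Qdq C x0 q = (Fen C x0 - Fen C q) / (x0 - q) by rewrite /Qdq (negbTE xq).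
rewrite e.
apply: cvg_trans hc; apply: near_eq_cvg.
have neq : \forall x \near x0, x != q.
  have := @cvg_id _ (nbhs x0). move/cvgrPdist_lt => /(_ `|x0 - q|).
  rewrite normr_gt0 subr_eq0 => /(_ xq).
  apply: filterS => x hx; apply/eqP => exq; subst x.
  by rewrite ltxx in hx.
apply: filterS neq => x xq'.
by rewrite /Qdq (negbTE xq').
Unshelve. all: by end_near.
Qed.

Definition gq C dt q x : R := Qdq C x q + dt * (ln x - ln q).

Lemma g_lt C dt q x y : 0 < dt -> 0 < q -> 0 < x -> x < y -> gq C dt q x < gq C dt q y.
Proof.
move=> dt0 q0 x0 xy; rewrite /gq.
have h1 := Qmono C _ _ _ x0 xy q0.
have h2 : ln x < ln y by rewrite ltr_ln ?posrE //; lra.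
have h3 : dt * ln x < dt * ln y by rewrite ltr_pM2l.
lra.
Qed.

Lemma g_le C dt q x y : 0 < dt -> 0 < q -> 0 < x -> x <= y -> gq C dt q x <= gq C dt q y.
Proof.
move=> dt0 q0 x0; rewrite le_eqVlt => /orP[/eqP->//|xy].
exact/ltW/g_lt.
Qed.

Lemma g_cont C dt q x0 : 0 < q -> 0 < x0 -> {for x0, continuous (gq C dt q)}.
Proof.
move=> q0 x0p; rewrite /prop_for /continuous_at /gq.
apply: cvgD; first exact: Q_cont.
apply: cvgM; first exact: cvg_cst.
by apply: cvgB; [exact: continuous_ln | exact: cvg_cst].
Qed.

Lemma g_solve C dt q al ga y : 0 < dt -> 0 < q -> 0 <= al -> 0 < ga ->
  exists x, 0 < x /\ al * x + ga * gq C dt q x = y.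
Proof.
move=> dt0 q0 al0 ga0.
have gd0 : 0 < ga * dt by rewrite mulr_gt0.
set z1 := ln q + (y - al * q - ga * dv C q) / (ga * dt).
set z2 := ln q + (y - ga * dv C q) / (ga * dt).
set xl := Num.min q (expR z1).
set xh := Num.max q (expR z2).
have xl0 : 0 < xl by rewrite lt_min q0 expR_gt0.
have xlq : xl <= q by rewrite ge_min lexx.
have xh0 : 0 < xh by rewrite lt_max q0.
have xhq : q <= xh by rewrite le_max lexx.
have lxl : ln xl <= z1.
  have : xl <= expR z1 by rewrite ge_min lexx orbT.
  by rewrite -ler_ln ?posrE ?expR_gt0 // expRK.
have lxh : z2 <= ln xh.
  have : expR z2 <= xh by rewrite le_max lexx orbT.
  by rewrite -ler_ln ?posrE ?expR_gt0 // expRK.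
have Ql : Qdq C xl q <= dv C q.
  rewrite -Qqq; move: xlq; rewrite le_eqVlt => /orP[/eqP->//|xlq'].
  exact: Qmono.
have Qh : dv C q <= Qdq C xh q.
  rewrite -Qqq; move: xhq; rewrite le_eqVlt => /orP[/eqP<-//|xhq'].
  exact: Qmono.
set f := fun x => al * x + ga * gq C dt q x.
have fl : f xl <= y.
  rewrite /f /gq.
  have e1 : (ga * dt) * (z1 - ln q) = y - al * q - ga * dv C q.
    rewrite /z1; field; by rewrite ?(gt_eqF gd0) ?(gt_eqF ga0) ?(gt_eqF dt0).
  have h1 : (ga * dt) * (ln xl - ln q) <= (ga * dt) * (z1 - ln q).
    by rewrite ler_pM2l // lerD2r.
  have h2 : ga * Qdq C xl q <= ga * dv C q by rewrite ler_pM2l.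
  have h3 : al * xl <= al * q by rewrite ler_wpM2l.
  lra.
have fh : y <= f xh.
  rewrite /f /gq.
  have e1 : (ga * dt) * (z2 - ln q) = y - ga * dv C q.
    rewrite /z2; field; by rewrite ?(gt_eqF gd0) ?(gt_eqF ga0) ?(gt_eqF dt0).
  have h1 : (ga * dt) * (z2 - ln q) <= (ga * dt) * (ln xh - ln q).
    by rewrite ler_pM2l // lerD2r.
  have h2 : ga * dv C q <= ga * Qdq C xh q by rewrite ler_pM2l.
  have h3 : 0 <= al * xh by rewrite mulr_ge0 // ltW.
  lra.
have lh : xl <= xh by apply: le_trans xhq.
have [x xin fx] : exists2 x, x \in `[xl, xh] & f x = y.
  apply: IVT => //.
    apply: continuous_in_subspaceT => x; rewrite inE /= in_itv /= => /andP[h _].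
    have x0 : 0 < x by apply: lt_le_trans h.
    rewrite /f /prop_for /continuous_at.
    apply: cvgD; first by apply: cvgM; [exact: cvg_cst | exact: cvg_id].
    by apply: cvgM; [exact: cvg_cst | exact: g_cont].
  apply/andP; split.
    by rewrite ge_min fl.
  by rewrite le_max fh orbT.
exists x; split => //.
by move: xin; rewrite in_itv /= => /andP[h _]; apply: lt_le_trans h.
Qed.

Lemma g_inv_le C dt q x y : 0 < dt -> 0 < q -> 0 < x -> 0 < y ->
  gq C dt q x <= gq C dt q y -> x <= y.
Proof.
move=> dt0 q0 x0 y0 h; rewrite leNgt; apply/negP => yx.
have := g_lt C dt q y x dt0 q0 y0 yx; lra.
Qed.

Lemma gqq C dt q : gq C dt q q = dv C q.
Proof. by rewrite /gq Qqq subrr mulr0 addr0. Qed.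

Lemma Phi_le C dt q ga x y : 0 < dt -> 0 < q -> 0 < ga -> 0 < x -> 0 < y ->
  x + ga * gq C dt q x <= y + ga * gq C dt q y -> x <= y.
Proof.
move=> dt0 q0 ga0 x0 y0 h; rewrite leNgt; apply/negP => yx.
have := g_lt C dt q y x dt0 q0 y0 yx => hg.
have : ga * gq C dt q y < ga * gq C dt q x by rewrite ltr_pM2l.
lra.
Qed.
End Ana.

Set Implicit Arguments. Unset Strict Implicit.
Section Disc.
Variable R : realType.
Variable N0 : nat.
Hypothesis N0p : (0 < N0)%N.
Implicit Types (M : sgrid R N0) (mu : grid R N0).

Definition Nw M mu i j k : R :=
  (sx M i j k * mu (ip i) j k + sx M (im i) j k * mu (im i) j k
 + sy M i j k * mu i (ip j) k + sy M i (im j) k * mu i (im j) k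
 + sz M i j k * mu i j (ip k) + sz M i j (im k) * mu i j (im k)) / (gh R N0 * gh R N0).

Definition Ww M i j k : R :=
  (sx M i j k + sx M (im i) j k + sy M i j k + sy M i (im j) k
 + sz M i j k + sz M i j (im k)) / (gh R N0 * gh R N0).

Lemma gh_neq0 : gh R N0 != 0.
Proof. by rewrite /gh invr_eq0 pnatr_eq0 -lt0n. Qed.

Lemma gh_gt0 : 0 < gh R N0.
Proof. by rewrite /gh invr_gt0 ltr0n. Qed.

Lemma ipim (i : 'I_N0) : ip (im i) = i.
Proof. exact: ord_predK. Qed.

Lemma divE M mu i j k :
  div_h (smul M (grad_h mu)) i j k = Nw M mu i j k - Ww M i j k * mu i j k.
Proof.
rewrite /div_h /smul /grad_h /Nw /Ww /= !ipim.
by field; rewrite gh_neq0.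
Qed.

Definition Mpos M := forall i j k,
  0 < sx M i j k /\ 0 < sy M i j k /\ 0 < sz M i j k.

Lemma Ww_gt0 M i j k : Mpos M -> 0 < Ww M i j k.
Proof.
move=> Mp; rewrite /Ww divr_gt0 ?mulr_gt0 ?gh_gt0 //.
have [a [b c]] := Mp i j k; have [a' _] := Mp (im i) j k.
have [_ [b' _]] := Mp i (im j) k; have [_ [_ c']] := Mp i j (im k).
lra.
Qed.

Lemma Nw_le M mu mu' i j k : Mpos M -> (forall i j k, mu i j k <= mu' i j k) ->
  Nw M mu i j k <= Nw M mu' i j k.
Proof.
move=> Mp h; rewrite /Nw ler_pM2r ?invr_gt0 ?mulr_gt0 ?gh_gt0 //.
have [a [b c]] := Mp i j k; have [a' _] := Mp (im i) j k.
have [_ [b' _]] := Mp i (im j) k; have [_ [_ c']] := Mp i j (im k).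
repeat apply: lerD; apply: ler_wpM2l; by [apply: ltW | apply: h].
Qed.

Lemma Nw_const M mu m i j k : (forall i j k, mu i j k = m) ->
  Nw M mu i j k = Ww M i j k * m.
Proof. by move=> h; rewrite /Nw /Ww !h; field; rewrite gh_neq0. Qed.

End Disc.
Unset Implicit Arguments. Set Strict Implicit.

Lemma exists_max (R : realType) (N0 : nat) (d : grid R N0) : (0 < N0)%N ->
  exists i, exists j, exists k, forall i' j' k', d i' j' k' <= d i j k.
Proof.
move=> N0p; pose i0 : 'I_N0 := Ordinal N0p.
pose F (p : 'I_N0 * 'I_N0 * 'I_N0) := d p.1.1 p.1.2 p.2.
case: (@arg_maxP _ R _ ((i0, i0), i0) xpredT F erefl) => [[[i j] k]] _ hp.
exists i, j, k => i' j' k'.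
exact: (hp ((i', j'), k')).
Qed.

Lemma maxpr (R : realType) (N0 : nat) (M : sgrid R N0) (dt : R) (r0 r r' mu mu' : grid R N0) :
  (0 < N0)%N -> Mpos M -> 0 < dt ->
  (forall i j k, (r i j k - r0 i j k) / dt = Nw M mu i j k - Ww M i j k * mu i j k) ->
  (forall i j k, (r' i j k - r0 i j k) / dt = Nw M mu' i j k - Ww M i j k * mu' i j k) ->
  (forall i j k, r i j k <= r' i j k -> mu i j k <= mu' i j k) ->
  forall i j k, mu i j k <= mu' i j k.
Proof.
move=> N0p Mp dt0 e e' mono.
have [i [j [k hmax]]] := @exists_max _ _ (fun i j k => mu i j k - mu' i j k) N0p.
suff : mu i j k - mu' i j k <= 0.
  move=> h i' j' k'; have := hmax i' j' k'; lra.
rewrite leNgt; apply/negP => dpos.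
have rgt : r' i j k < r i j k.
  rewrite ltNge; apply/negP => /mono; lra.
have hl : 0 < (r i j k - r0 i j k) / dt - (r' i j k - r0 i j k) / dt.
  rewrite -mulrBl divr_gt0 //; lra.
rewrite e e' in hl.
have : Nw M mu i j k - Ww M i j k * mu i j k - (Nw M mu' i j k - Ww M i j k * mu' i j k) <= 0.
  have -> : Nw M mu i j k - Ww M i j k * mu i j k - (Nw M mu' i j k - Ww M i j k * mu' i j k)
    = (sx M i j k * ((mu (ip i) j k - mu' (ip i) j k) - (mu i j k - mu' i j k))
     + sx M (im i) j k * ((mu (im i) j k - mu' (im i) j k) - (mu i j k - mu' i j k))
     + sy M i j k * ((mu i (ip j) k - mu' i (ip j) k) - (mu i j k - mu' i j k))
     + sy M i (im j) k * ((mu i (im j) k - mu' i (im j) k) - (mu i j k - mu' i j k))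
     + sz M i j k * ((mu i j (ip k) - mu' i j (ip k)) - (mu i j k - mu' i j k))
     + sz M i j (im k) * ((mu i j (im k) - mu' i j (im k)) - (mu i j k - mu' i j k)))
       / (gh R N0 * gh R N0).
    rewrite /Nw /Ww; field; by rewrite (gh_neq0 _ N0p).
  rewrite pmulr_lle0 ?invr_gt0 ?mulr_gt0 ?(gh_gt0 _ N0p) //.
  have [a [b c]] := Mp i j k; have [a' _] := Mp (im i) j k.
  have [_ [b' _]] := Mp i (im j) k; have [_ [_ c']] := Mp i j (im k).
  have T : forall (w x : R), 0 < w -> x <= 0 -> w * x <= 0.
    by move=> w x w0 x0; rewrite mulr_ge0_le0 // ltW.
  have hm : forall i' j' k', (mu i' j' k' - mu' i' j' k') - (mu i j k - mu' i j k) <= 0.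
    by move=> i' j' k'; rewrite subr_le0; apply: hmax.
  have := T _ _ a (hm (ip i) j k); have := T _ _ a' (hm (im i) j k).
  have := T _ _ b (hm i (ip j) k); have := T _ _ b' (hm i (im j) k).
  have := T _ _ c (hm i j (ip k)); have := T _ _ c' (hm i j (im k)).
  lra.
lra.
Qed.

Theorem theorem3p5 (R : realType) (N0 : nat) (dt C : R) (D : R -> R)
  (rho0 rhohat : grid R N0) :
  (0 < N0)%N -> 0 < dt ->
  (forall x : R, 0 < x -> 0 < D x) ->
  (forall x : R, 0 < x -> {for x, continuous D}) ->
  (forall i j k, 0 < rho0 i j k) ->
  (forall i j k, 0 < rhohat i j k) ->
  exists! rho1 : grid R N0,
    (forall i j k, 0 < rho1 i j k) /\ scheme dt C D rho0 rhohat rho1.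
Proof.
move=> N0p dt0 Dpos _ r0p rhp.
pose rh : grid R N0 := fun i j k => (rho0 i j k + rhohat i j k) / 2.
pose M := avg_h (fun i j k => D (rh i j k) * rh i j k).
have rhpos : forall i j k, 0 < rh i j k.
  by move=> i j k; rewrite /rh divr_gt0 // addr_gt0.
have Mp : Mpos M.
  have hp : forall i j k, 0 < D (rh i j k) * rh i j k.
    by move=> i j k; rewrite mulr_gt0 ?Dpos.
  move=> i j k; rewrite /M /avg_h /=.
  by split; [|split]; rewrite divr_gt0 // addr_gt0.
pose G (r : grid R N0) : grid R N0 := fun i j k => gq _ C dt (rho0 i j k) (r i j k).
have schemeE : forall r, scheme dt C D rho0 rhohat r <->
   forall i j k, (r i j k - rho0 i j k) / dt = Nw M (G r) i j k - Ww M i j k * G r i j k.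
  move=> r; rewrite /scheme; split => h i j k; have := h i j k.
    by rewrite (divE N0p).
  by rewrite (divE N0p).
have Gle : forall r r' i j k, 0 < r i j k -> r i j k <= r' i j k -> G r i j k <= G r' i j k.
  by move=> r r' i j k h1 h2; apply: g_le.
have Ginv : forall r r' i j k, 0 < r i j k -> 0 < r' i j k -> G r i j k <= G r' i j k ->
    r i j k <= r' i j k.
  by move=> r r' i j k h1 h2 h3; exact: (g_inv_le _ C _ _ _ _ dt0 (r0p i j k) h1 h2 h3).
have uniq : forall r r', (forall i j k, 0 < r i j k) -> scheme dt C D rho0 rhohat r ->
    (forall i j k, 0 < r' i j k) -> scheme dt C D rho0 rhohat r' ->
    forall i j k, r i j k <= r' i j k.
  move=> r r' rp /schemeE sr r'p /schemeE sr' i j k.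
  have hG' := @maxpr R N0 M dt rho0 r r' (G r) (G r') N0p Mp dt0 sr sr'
     (fun i j k h => Gle _ _ i j k (rp i j k) h).
  apply: Ginv => //; exact: hG'.
have Wp : forall i j k, 0 < Ww M i j k by move=> i j k; exact: Ww_gt0.
have Tex : forall (r : grid R N0) i j k, {x : R | 0 < x /\
    x + (dt * Ww M i j k) * gq _ C dt (rho0 i j k) x = rho0 i j k + dt * Nw M (G r) i j k}.
  move=> r i j k; apply: cid.
  have [x [x0 hx]] := g_solve R C dt (rho0 i j k) 1 (dt * Ww M i j k)
     (rho0 i j k + dt * Nw M (G r) i j k) dt0 (r0p i j k) ler01 (mulr_gt0 dt0 (Wp i j k)).
  by exists x; rewrite mul1r in hx.
pose T (r : grid R N0) : grid R N0 := fun i j k => sval (Tex r i j k).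
have Tpos : forall r i j k, 0 < T r i j k by move=> r i j k; case: (svalP (Tex r i j k)).
have Teq : forall r i j k, T r i j k + (dt * Ww M i j k) * gq _ C dt (rho0 i j k) (T r i j k)
    = rho0 i j k + dt * Nw M (G r) i j k.
  by move=> r i j k; case: (svalP (Tex r i j k)).
have Tmono : forall r r', (forall i j k, 0 < r i j k) -> (forall i j k, r i j k <= r' i j k) ->
    forall i j k, T r i j k <= T r' i j k.
  move=> r r' rp rr' i j k.
  apply: (Phi_le _ C _ _ _ _ _ dt0 (r0p i j k) (mulr_gt0 dt0 (Wp i j k)) (Tpos r i j k) (Tpos r' i j k)).
  rewrite !Teq lerD2l ler_pM2l //.
  apply: (Nw_le N0p) => // i' j' k'; exact: Gle.
pose f (p : 'I_N0 * 'I_N0 * 'I_N0) := `|dv _ C (rho0 p.1.1 p.1.2 p.2)|.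
pose S0 := \sum_(p : 'I_N0 * 'I_N0 * 'I_N0) f p.
have fS : forall i j k, `|dv _ C (rho0 i j k)| <= S0.
  move=> i j k; rewrite /S0 (bigD1 ((i, j), k)) //=.
  rewrite lerDl; apply: sumr_ge0 => p _; exact: normr_ge0.
have mle : forall i j k, - S0 <= dv _ C (rho0 i j k).
  move=> i j k; have := fS i j k; have := ler_norm (- dv _ C (rho0 i j k)).
  rewrite normrN; lra.
have Mge : forall i j k, dv _ C (rho0 i j k) <= S0.
  move=> i j k; have := fS i j k; have := ler_norm (dv _ C (rho0 i j k)); lra.
have sol0 : forall (y : R) i j k, {x : R | 0 < x /\ gq _ C dt (rho0 i j k) x = y}.
  move=> y i j k; apply: cid.
  have [x [x0 hx]] := g_solve R C dt (rho0 i j k) 0 1 y dt0 (r0p i j k) (lexx 0) ltr01.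
  by exists x; rewrite mul0r add0r mul1r in hx.
pose lo : grid R N0 := fun i j k => sval (sol0 (- S0) i j k).
pose hi : grid R N0 := fun i j k => sval (sol0 S0 i j k).
have lop : forall i j k, 0 < lo i j k by move=> i j k; case: (svalP (sol0 (- S0) i j k)).
have hip : forall i j k, 0 < hi i j k by move=> i j k; case: (svalP (sol0 S0 i j k)).
have Glo : forall i j k, G lo i j k = - S0 by move=> i j k; case: (svalP (sol0 (- S0) i j k)).
have Ghi : forall i j k, G hi i j k = S0 by move=> i j k; case: (svalP (sol0 S0 i j k)).
have lo_r0 : forall i j k, lo i j k <= rho0 i j k.
  move=> i j k; apply: (g_inv_le _ C _ _ _ _ dt0 (r0p i j k) (lop i j k) (r0p i j k)).
  by have := Glo i j k; rewrite /G => ->; rewrite gqq.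
have r0_hi : forall i j k, rho0 i j k <= hi i j k.
  move=> i j k; apply: (g_inv_le _ C _ _ _ _ dt0 (r0p i j k) (r0p i j k) (hip i j k)).
  by have := Ghi i j k; rewrite /G => ->; rewrite gqq.
have lo_hi : forall i j k, lo i j k <= hi i j k.
  by move=> i j k; apply: le_trans (r0_hi i j k).
have loT : forall i j k, lo i j k <= T lo i j k.
  move=> i j k.
  apply: (Phi_le _ C _ _ _ _ _ dt0 (r0p i j k) (mulr_gt0 dt0 (Wp i j k)) (lop i j k) (Tpos lo i j k)).
  rewrite Teq (Nw_const N0p M (m := - S0)) //.
  have -> : gq R C dt (rho0 i j k) (lo i j k) = - S0 by exact: Glo.
  have := lo_r0 i j k; lra.
have Thi : forall i j k, T hi i j k <= hi i j k.
  move=> i j k.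
  apply: (Phi_le _ C _ _ _ _ _ dt0 (r0p i j k) (mulr_gt0 dt0 (Wp i j k)) (Tpos hi i j k) (hip i j k)).
  rewrite Teq (Nw_const N0p M (m := S0)) //.
  have -> : gq R C dt (rho0 i j k) (hi i j k) = S0 by exact: Ghi.
  have := r0_hi i j k; lra.
pose S := [set r : grid R N0 | (forall i j k, lo i j k <= r i j k <= hi i j k)
                            /\ (forall i j k, r i j k <= T r i j k)].
have loS : S lo.
  split => i j k; last exact: loT.
  by rewrite lexx lo_hi.
pose E i j k := (fun r : grid R N0 => r i j k) @` S.
pose rs : grid R N0 := fun i j k => sup (E i j k).
have Ene : forall i j k, E i j k !=set0 by move=> i j k; exists (lo i j k), lo.
have Eub : forall i j k, ubound (E i j k) (hi i j k).
  by move=> i j k _ [r [hr _] <-]; have /andP[] := hr i j k.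
have Ehas : forall i j k, has_ubound (E i j k) by move=> i j k; exists (hi i j k).
have le_rs : forall r, S r -> forall i j k, r i j k <= rs i j k.
  by move=> r Sr i j k; apply: (ub_le_sup (Ehas i j k)); exists r.
have rs_hi : forall i j k, rs i j k <= hi i j k.
  by move=> i j k; apply: ge_sup.
have lo_rs : forall i j k, lo i j k <= rs i j k by exact: le_rs.
have rsp : forall i j k, 0 < rs i j k.
  by move=> i j k; apply: lt_le_trans (lo_rs i j k).
have rs_T : forall i j k, rs i j k <= T rs i j k.
  move=> i j k; apply: ge_sup => // _ [r [hr hT] <-].
  apply: le_trans (hT i j k) _; apply: Tmono => //.
    by move=> i' j' k'; apply: lt_le_trans (lop i' j' k') _; have /andP[] := hr i' j' k'.
  exact: le_rs.
have TS : S (T rs).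
  split => i j k.
    apply/andP; split; first exact: le_trans (lo_rs i j k) (rs_T i j k).
    apply: le_trans (Thi i j k); exact: Tmono.
  by apply: Tmono.
have hfix : forall i j k, T rs i j k = rs i j k.
  by move=> i j k; apply/le_anti/andP; split; [exact: le_rs | exact: rs_T].
have rs_sol : scheme dt C D rho0 rhohat rs.
  apply/schemeE => i j k.
  have e := Teq rs i j k; rewrite hfix in e.
  have e2 : rs i j k - rho0 i j k = dt * (Nw M (G rs) i j k - Ww M i j k * G rs i j k).
    rewrite /G; lra.
  by rewrite e2 mulrC mulKf // gt_eqF.
exists rs; split; first by split.
move=> r' [r'p sr'].
apply/funext => i; apply/funext => j; apply/funext => k.
by apply/le_anti/andP; split; apply: uniq.
Qed.
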